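(* $\mathrm D(\log a)\cap\ell^2_{\rm fin}=\{0\}$ and $\mathrm D(\log a^* )=\{0\}$. In particular the phase operator $\rho=-\frac i2(\log a-\log a^* )$, defined on $\mathrm D(\log a)\cap \mathrm D(\log a^* )$, has $\mathrm D(\rho)=\{0\}$.
   Context: $\ell^2=\ell^2(\mathbb N)$, $\mathbb N=\{0,1,2,\dots\}$, with orthonormal basis $(\xi_n)$; $\ell^2_{\rm fin}$ is the set of finite linear combinations of the $\xi_n$. The annihilation operator $a$ is the closed operator with $a\xi_n=\sqrt n\,\xi_{n-1}$ ($a\xi_0=0$) and domain $\{\sum c_n\xi_n:\sum n|c_n|^2<\infty\}$; $a^*$ is its adjoint, $a^*\xi_n=\sqrt{n+1}\,\xi_{n+1}$. For a linear operator $A$, $\log A$ is defined by $\mathrm D(\log A)=\{f\in\bigcap_{k\ge0}\mathrm D(A^k):\lim_{K\to\infty}\sum_{k=1}^K\frac1k(\mathbf 1-A)^kf\text{ exists}\}$ and $\log Af=-\sum_{k=1}^\infty\frac1k(\mathbf 1-A)^kf$. *)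

(* Defs.v *)
From Stdlib Require Import Reals.
From Coquelicot Require Import Coquelicot.
Open Scope R_scope.

(* Vectors of l^2(N) written in the basis (xi_n): f = sum_n f n xi_n. *)
Definition seqC := nat -> C.

Definition l2 (f : seqC) : Prop := ex_series (fun n => (Cmod (f n)) ^ 2).

(* A (possibly unbounded) linear operator: domain + action on coefficient
   sequences (the action is only meaningful on the domain). *)
Record op := Op { dom : seqC -> Prop ; act : seqC -> seqC }.

(* annihilation operator a: a xi_n = sqrt n xi_(n-1), i.e. (a f)_n = sqrt(n+1) f_(n+1),
   domain {sum c_n xi_n : sum n |c_n|^2 < oo} *)
Definition ann : op :=
  Op (fun f => l2 f /\ ex_series (fun n => INR n * (Cmod (f n)) ^ 2))
     (fun f n => Cmult (RtoC (sqrt (INR (S n)))) (f (S n))).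

(* creation operator a^* (adjoint of a): a^* xi_n = sqrt(n+1) xi_(n+1), i.e.
   (a^* f)_0 = 0, (a^* f)_(m+1) = sqrt(m+1) f_m, on its maximal domain *)
Definition cre_act (f : seqC) (n : nat) : C :=
  match n with
  | O => RtoC 0
  | S m => Cmult (RtoC (sqrt (INR (S m)))) (f m)
  end.

Definition cre : op := Op (fun f => l2 f /\ l2 (cre_act f)) cre_act.

Fixpoint dom_pow (A : op) (k : nat) (f : seqC) : Prop :=
  match k with
  | O => True
  | S k' => dom A f /\ dom_pow A k' (act A f)
  end.

Definition one_minus (A : op) (g : seqC) : seqC := fun n => Cminus (g n) (act A g n).

Fixpoint one_minus_pow (A : op) (k : nat) (f : seqC) : seqC :=
  match k with
  | O => f
  | S k' => one_minus A (one_minus_pow A k' f)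
  end.

Fixpoint log_partial (A : op) (f : seqC) (K : nat) : seqC :=
  match K with
  | O => fun _ => RtoC 0
  | S K' => fun n => Cplus (log_partial A f K' n)
                       (Cmult (RtoC (/ INR (S K'))) (one_minus_pow A (S K') f n))
  end.

Definition l2_lim (u : nat -> seqC) (g : seqC) : Prop :=
  l2 g /\ (forall K, ex_series (fun n => (Cmod (Cminus (u K n) (g n))) ^ 2)) /\
  is_lim_seq (fun K => Series (fun n => (Cmod (Cminus (u K n) (g n))) ^ 2)) 0.

Definition log_dom (A : op) (f : seqC) : Prop :=
  (forall k, dom_pow A k f) /\ exists g, l2_lim (log_partial A f) g.

Definition l2_fin (f : seqC) : Prop := exists N, forall n, (N <= n)%nat -> f n = RtoC 0.

Definition rho_dom (f : seqC) : Prop := log_dom ann f /\ log_dom cre f.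

Definition is_zero (f : seqC) : Prop := forall n, f n = RtoC 0.

(* Main.v *)
Require Import Defs.
From Stdlib Require Import Reals Lra Lia ZArith.
From Coquelicot Require Import Coquelicot.
Open Scope R_scope.

Lemma series0 : Series (fun _ => 0) = 0.
Proof.
  rewrite <- (Series_ext (fun n => 0 * 0)) by (intros; ring).
  rewrite (Series_scal_l 0 (fun _ => 0)); ring.
Qed.

Lemma series_nonneg (b : nat -> R) : (forall n, 0 <= b n) -> ex_series b -> 0 <= Series b.
Proof.
  intros Hb He. rewrite <- series0. apply Series_le; auto. intros; split; [lra|auto].
Qed.

Lemma series_ge_term : forall M (b : nat -> R), (forall n, 0 <= b n) -> ex_series b -> b M <= Series b.
Proof.
  induction M; intros b Hb He; rewrite (Series_incr_1 b He).
  - assert (0 <= Series (fun k => b (S k))).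
    { apply series_nonneg; auto.
      apply (ex_series_ext (fun k => b (1 + k)%nat)); [reflexivity|].
      apply (ex_series_incr_n b 1); auto. }
    lra.
  - assert (b (S M) <= Series (fun k => b (S k))).
    { apply (IHM (fun k => b (S k))); auto.
      apply (ex_series_ext (fun k => b (1 + k)%nat)); [reflexivity|].
      apply (ex_series_incr_n b 1); auto. }
    specialize (Hb O). lra.
Qed.

Fixpoint H (K : nat) : R := match K with O => 0 | S K' => H K' + / INR (S K') end.

Lemma H_nonneg K : 0 <= H K.
Proof.
  induction K; cbn [H]; [lra|]. assert (0 < / INR (S K)) by (apply Rinv_0_lt_compat, lt_0_INR; lia). lra.
Qed.

Lemma H_double_aux K : (1 <= K)%nat -> forall i, (i <= K)%nat -> H K + INR i / (2 * INR K) <= H (K + i).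
Proof.
  intros HK i; induction i; intros Hi.
  - rewrite Nat.add_0_r. simpl. unfold Rdiv. rewrite Rmult_0_l. lra.
  - rewrite Nat.add_succ_r. cbn [H]. rewrite S_INR.
    assert (IH := IHi ltac:(lia)).
    assert (HKp : 0 < INR K) by (apply lt_0_INR; lia).
    assert (Hle : INR (S (K + i)) <= 2 * INR K).
    { replace (2 * INR K) with (INR (2 * K)) by (rewrite mult_INR; simpl; ring).
      apply le_INR; lia. }
    assert (Hp : 0 < INR (S (K + i))) by (apply lt_0_INR; lia).
    assert (/ (2 * INR K) <= / INR (S (K + i))) by (apply Rinv_le_contravar; lra).
    unfold Rdiv in *. lra.
Qed.

Lemma H_pow j : INR j / 2 <= H (2 ^ j).
Proof.
  induction j.
  - simpl. unfold Rdiv. rewrite Rmult_0_l. lra.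
  - assert (Hp : (1 <= 2 ^ j)%nat) by (apply Nat.le_succ_l, Nat.neq_0_lt_0, Nat.pow_nonzero; lia).
    replace (2 ^ S j)%nat with (2 ^ j + 2 ^ j)%nat by (simpl; lia).
    assert (A := H_double_aux (2 ^ j) Hp (2 ^ j) (le_n _)).
    assert (HKp : 0 < INR (2 ^ j)) by (apply lt_0_INR; lia).
    replace (INR (2 ^ j) / (2 * INR (2 ^ j))) with (/2) in A by (field; lra).
    rewrite S_INR. lra.
Qed.

Lemma H_unbounded B : forall N, exists K', (N <= K')%nat /\ B < H K'.
Proof.
  intros N.
  destruct (archimed B) as [Hu _].
  set (j := (2 * (N + Z.to_nat (up B) + 1))%nat).
  exists (2 ^ j)%nat. split.
  - assert (j < 2 ^ j)%nat by (apply Nat.pow_gt_lin_r; lia). lia.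
  - eapply Rlt_le_trans; [|apply H_pow].
    assert (B < INR (Z.to_nat (up B)) + 1).
    { destruct (Z_le_gt_dec 0 (up B)).
      - rewrite INR_IZR_INZ, Z2Nat.id by lia. lra.
      - assert (IZR (up B) <= 0) by (apply IZR_le; lia). pose proof (pos_INR (Z.to_nat (up B))). lra. }
    unfold j. rewrite mult_INR, !plus_INR. replace (INR 2) with 2 by (simpl; ring). replace (INR 1) with 1 by reflexivity. pose proof (pos_INR N). lra.
Qed.

Lemma core (A : op) (f : seqC) (M : nat) :
  (forall k, one_minus_pow A k f M = f M) ->
  (exists g, l2_lim (log_partial A f) g) -> f M = RtoC 0.
Proof.
  intros Hk [g [_ [Hex Hlim]]].
  assert (Hlp : forall K, log_partial A f K M = Cmult (f M) (RtoC (H K))).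
  { induction K; cbn [log_partial].
    - unfold Cmult, RtoC; simpl. apply injective_projections; simpl; ring.
    - rewrite IHK, Hk. cbn [H]. rewrite RtoC_plus. ring. }
  destruct (Ceq_dec (f M) (RtoC 0)) as [E|E]; auto. exfalso.
  apply Cmod_gt_0 in E.
  apply is_lim_seq_spec in Hlim. unfold is_lim_seq', eventually in Hlim.
  destruct (Hlim (mkposreal 1 Rlt_0_1)) as [N HN]. cbn [pos] in HN.
  pose proof (H_unbounded ((1 + Cmod (g M)) / Cmod (f M))) as HU.
  destruct (HU N) as [K [HNK HB]].
  specialize (HN K HNK).
  assert (Hs : Cmod (Cminus (log_partial A f K M) (g M)) ^ 2 <= 1).
  { eapply Rle_trans; [apply (series_ge_term M (fun n => Cmod (Cminus (log_partial A f K n) (g n)) ^ 2))|].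
    - intros; apply pow2_ge_0.
    - apply Hex.
    - rewrite Rminus_0_r in HN. apply Rabs_def2 in HN. destruct HN; lra. }
  assert (Hc : Cmod (Cminus (log_partial A f K M) (g M)) <= 1).
  { pose proof (Cmod_ge_0 (Cminus (log_partial A f K M) (g M))).
    destruct (Rle_dec (Cmod (Cminus (log_partial A f K M) (g M))) 1); auto. nra. }
  assert (Ht : Cmod (log_partial A f K M) <= 1 + Cmod (g M)).
  { replace (log_partial A f K M) with (Cplus (Cminus (log_partial A f K M) (g M)) (g M)) by ring.
    eapply Rle_trans; [apply Cmod_triangle|]. lra. }
  rewrite Hlp, Cmod_mult, Cmod_R, Rabs_pos_eq in Ht by apply H_nonneg.
  apply (Rmult_lt_compat_r (Cmod (f M))) in HB; auto.
  unfold Rdiv in HB. rewrite Rmult_assoc, Rinv_l, Rmult_1_r in HB by lra. lra.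
Qed.

Lemma ex0 : ex_series (fun _ : nat => 0).
Proof.
  assert (G : is_series (fun n => (/2) ^ n) (/ (1 - /2))) by (apply is_series_geom; rewrite Rabs_pos_eq; lra).
  apply (is_series_scal_r 0) in G.
  eexists. eapply is_series_ext; [|exact G]. intros; simpl; ring.
Qed.

Definition good (A : op) := forall f, is_zero f -> dom A f /\ is_zero (act A f).

Lemma l2_zero f : is_zero f -> l2 f.
Proof.
  intros Hf. unfold l2. apply (ex_series_ext (fun _ => 0)).
  - intros n. rewrite Hf, Cmod_0, pow_i by lia; reflexivity.
  - apply ex0.
Qed.

Lemma good_ann : good ann.
Proof.
  intros f Hf. split.
  - split; [apply l2_zero; auto|]. apply (ex_series_ext (fun _ => 0)).
    + intros n. rewrite Hf, Cmod_0, pow_i, Rmult_0_r by lia; reflexivity.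
    + apply ex0.
  - intros n. simpl. rewrite Hf. ring.
Qed.

Lemma cre_zero f : is_zero f -> is_zero (cre_act f).
Proof. intros Hf [|n]; simpl; [reflexivity|]. rewrite Hf. ring. Qed.

Lemma good_cre : good cre.
Proof.
  intros f Hf. split.
  - split; apply l2_zero; auto. apply cre_zero; auto.
  - apply cre_zero; auto.
Qed.

Lemma zero_log_dom A : good A -> forall f, is_zero f -> log_dom A f.
Proof.
  intros HA f Hf. split.
  - intros k. revert f Hf. induction k; intros f Hf; simpl; auto.
    destruct (HA f Hf). split; auto.
  - assert (Hp : forall k, is_zero (one_minus_pow A k f)).
    { induction k; simpl; auto. intros n. unfold one_minus.
      destruct (HA _ IHk) as [_ Z]. rewrite IHk, Z. ring. }
    assert (Hl : forall K, is_zero (log_partial A f K)).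
    { induction K; intros n; simpl; [reflexivity|]. rewrite IHK.
      pose proof (Hp (S K) n) as P. simpl in P. rewrite P. ring. }
    exists (fun _ => RtoC 0). split; [apply l2_zero; intros n; reflexivity|].
    assert (E : forall K n, Cmod (Cminus (log_partial A f K n) (RtoC 0)) ^ 2 = 0).
    { intros K n. rewrite Hl. replace (Cminus (RtoC 0) (RtoC 0)) with (RtoC 0) by ring.
      rewrite Cmod_0. ring. }
    split.
    + intros K. apply (ex_series_ext (fun _ => 0)); [intros; rewrite E; reflexivity|].
      apply ex0.
    + apply (is_lim_seq_ext (fun _ => 0)); [|apply is_lim_seq_const].
      intros K. rewrite (Series_ext _ (fun _ => 0)); [rewrite series0; reflexivity|].
      intros; rewrite E; reflexivity.
Qed.

Lemma ann_down f M : (forall n, (M < n)%nat -> f n = RtoC 0) ->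
  forall k, one_minus_pow ann k f M = f M /\ forall n, (M < n)%nat -> one_minus_pow ann k f n = RtoC 0.
Proof.
  intros Hf k. induction k as [|k [IH1 IH2]]; simpl; [auto|].
  unfold one_minus; simpl. split.
  - rewrite IH1, IH2 by lia. ring.
  - intros n Hn. rewrite !IH2 by lia. ring.
Qed.

Lemma cre_up f M : (forall n, (n < M)%nat -> f n = RtoC 0) ->
  forall k, one_minus_pow cre k f M = f M /\ forall n, (n < M)%nat -> one_minus_pow cre k f n = RtoC 0.
Proof.
  intros Hf k. induction k as [|k [IH1 IH2]]; simpl; [auto|].
  unfold one_minus; simpl. split.
  - destruct M as [|m]; simpl.
    + rewrite IH1. ring.
    + rewrite IH1, IH2 by lia. ring.
  - intros n Hn. rewrite IH2 by lia. destruct n as [|m]; simpl; [ring|].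
    rewrite IH2 by lia. ring.
Qed.

Theorem mainTheorem3 :
  (forall f : seqC, (log_dom ann f /\ l2_fin f) <-> is_zero f) /\
  (forall f : seqC, log_dom cre f <-> is_zero f) /\
  (forall f : seqC, rho_dom f <-> is_zero f).
Proof.
  assert (P2 : forall f : seqC, log_dom cre f <-> is_zero f).
  { intros f; split; [|apply zero_log_dom, good_cre].
    intros [_ Hg] n. induction n as [n IH] using lt_wf_ind.
    apply (core cre f n); auto. intros k. apply (cre_up f n IH k). }
  split; [|split; auto].
  - intros f; split.
    + intros [[_ Hg] [N HN]].
      assert (D : forall d n, (N - d <= n)%nat -> f n = RtoC 0).
      { induction d; intros n Hn.
        - apply HN; lia.
        - destruct (le_lt_dec (N - d) n) as [h|h]; [auto|].
          apply (core ann f n); auto. intros k.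
          apply (ann_down f n); intros; apply IHd; lia. }
      intros n. apply (D N). lia.
    + intros Hf. split; [exact (zero_log_dom ann good_ann f Hf)|]. exists O. intros; apply Hf.
  - intros f; split.
    + intros [_ H2]. apply P2; auto.
    + intros Hf. split; [exact (zero_log_dom ann good_ann f Hf)|apply P2; auto].
Qed.
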